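(* Let $\mathcal R=(c_0,|||\cdot|||)$ be Read's space (defined in the context). Under the canonical identification of the bidual $\mathcal R^{**}$ with $\ell_\infty$ (coming from $c_0^{**}=\ell_\infty$ as vector spaces, the norm $|||\cdot|||$ being equivalent to $\|\cdot\|_\infty$), the bidual norm of $\mathcal R^{**}$ is given, for every $\bar x\in\ell_\infty$, by the same formula $$|||\bar x||| = \|\bar x\|_\infty + \sum_{n \in \mathbb N} 2^{-a_n^2}\left|\langle \bar x, u_n - e_{a_n} \rangle\right|.$$ That is, $\mathcal R^{**}$ is isometric to $\ell_\infty$ equipped with this norm.
   Context: Let $c_{00}(\mathbb Q)$ be the set of finitely supported sequences with rational coefficients, and let $(u_n)_{n\in\mathbb N}$ be a sequence in $c_{00}(\mathbb Q)$ which lists every element of $c_{00}(\mathbb Q)$ infinitely many times. Let $(a_n)_{n\in\mathbb N}$ be a strictly increasing sequence of positive integers with $a_n>\max\operatorname{supp} u_n$ and $a_n>\|u_n\|_1$ for every $n$. $(e_n)$ denotes the canonical unit vectors and $\langle x,y\rangle=\sum_n x_ny_n$ for $x\in\ell_\infty$, $y\in\ell_1$. Read's norm on $c_0$ is $|||x||| = \|x\|_\infty + \sum_{n} 2^{-a_n^2}|\langle x, u_n - e_{a_n}\rangle|$ for $x\in c_0$; it satisfies $\|x\|_\infty\le|||x|||\le 3\|x\|_\infty$, and Read's space is $\mathcal R=(c_0,|||\cdot|||)$. All spaces are real. *)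

(* Defs.v *)
From Stdlib Require Import Reals QArith.
From Coquelicot Require Import Coquelicot.
Open Scope R_scope.

Definition in_c0 (x : nat -> R) : Prop := is_lim_seq x 0.

Definition in_linf (x : nat -> R) : Prop := exists M : R, forall n, Rabs (x n) <= M.

Definition in_l1 (y : nat -> R) : Prop := ex_series (fun n => Rabs (y n)).

Definition pairing (x y : nat -> R) : R := Series (fun n => x n * y n).

Definition supnorm (x : nat -> R) : R :=
  real (Lub_Rbar (fun r => exists n, r = Rabs (x n))).

Definition unitvec (m : nat) : nat -> R := fun k => if Nat.eqb k m then 1 else 0.

Definition fin_supp {T} (z0 : T) (v : nat -> T) : Prop :=
  exists N : nat, forall k, (N <= k)%nat -> v k = z0.

(* Hypotheses on the data (u_n), (a_n) of Read's construction.
   u n : nat -> R is the n-th element of c00(Q) (real values that are rationals). *)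
Definition read_data (u : nat -> nat -> R) (a : nat -> nat) : Prop :=
  (forall n k, exists q : Q, u n k = Q2R q) /\
  (forall v : nat -> Q, fin_supp 0%Q v ->
     forall m : nat, exists n : nat, (m <= n)%nat /\ forall k, u n k = Q2R (v k)) /\
  (forall n, (0 < a n)%nat) /\
  (forall n, (a n < a (S n))%nat) /\
  (forall n k, u n k <> 0 -> (k < a n)%nat) /\
  (forall n, Series (fun k => Rabs (u n k)) < INR (a n)).

Definition read_norm (u : nat -> nat -> R) (a : nat -> nat) (x : nat -> R) : R :=
  supnorm x +
  Series (fun n => (/ 2) ^ (a n * a n) *
                   Rabs (pairing x (fun k => u n k - unitvec (a n) k))).

(* Dual unit ball of R = (c0, |||.|||), identified with l_1 via c0^* = l_1:
   y in l_1 with |<x,y>| <= |||x||| for all x in c0. *)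
Definition dual_ball (u : nat -> nat -> R) (a : nat -> nat) (y : nat -> R) : Prop :=
  in_l1 y /\ forall x, in_c0 x -> Rabs (pairing x y) <= read_norm u a x.

Definition bidual_norm (u : nat -> nat -> R) (a : nat -> nat) (xbar : nat -> R) : Rbar :=
  Lub_Rbar (fun r => exists y, dual_ball u a y /\ r = Rabs (pairing xbar y)).

(* Main.v *)
Require Import Defs.
From Stdlib Require Import Reals QArith.
From Coquelicot Require Import Coquelicot.
From Stdlib Require Import Lra Lia.
Open Scope R_scope.


Lemma sum_zero_tail (f : nat -> R) N :
  (forall k, (N < k)%nat -> f k = 0) -> forall p, sum_f_R0 f (N + p) = sum_f_R0 f N.
Proof.
  intros H p; induction p as [|p IH].
  - now rewrite Nat.add_0_r.
  - rewrite Nat.add_succ_r; simpl; rewrite IH, H by lia; ring.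
Qed.

Lemma series_fin (f : nat -> R) N :
  (forall k, (N < k)%nat -> f k = 0) -> is_series f (sum_f_R0 f N).
Proof.
  intros H; apply is_series_Reals; intros eps Heps; exists N; intros n Hn.
  replace n with (N + (n - N))%nat by lia.
  rewrite sum_zero_tail by auto. unfold R_dist. rewrite Rminus_diag, Rabs_R0. lra.
Qed.

Lemma Series_fin (f : nat -> R) N :
  (forall k, (N < k)%nat -> f k = 0) -> Series f = sum_f_R0 f N.
Proof. intros; apply is_series_unique, series_fin; auto. Qed.

Lemma ex_series_fin (f : nat -> R) N :
  (forall k, (N < k)%nat -> f k = 0) -> ex_series f.
Proof. intros H; eexists; apply (series_fin f N); auto. Qed.

Lemma sum_unitvec (f : nat -> R) m L :
  sum_f_R0 (fun k => f k * unitvec m k) L = if Nat.leb m L then f m else 0.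
Proof.
  unfold unitvec; induction L as [|L IH]; cbn [sum_f_R0].
  - destruct m; simpl; ring.
  - rewrite IH. destruct (Nat.eqb_spec (S L) m); destruct (Nat.leb_spec m L);
      destruct (Nat.leb_spec m (S L)); try lia; try subst m; ring.
Qed.

Fixpoint psum (h : nat -> R) (J : nat) : R :=
  match J with O => 0 | S J => psum h J + h J end.

Lemma psum_sum h J : psum h (S J) = sum_f_R0 h J.
Proof. induction J; simpl in *; [ring| rewrite <- IHJ; simpl; ring]. Qed.

Lemma psum_lim h : ex_series h -> is_lim_seq (psum h) (Series h).
Proof.
  intros He. apply is_lim_seq_incr_1.
  apply (is_lim_seq_ext (sum_n h)). { intros n; rewrite sum_n_Reals, psum_sum; auto. }
  apply Series_correct; auto.
Qed.

Lemma psum_mono h : (forall n, 0 <= h n) -> forall J p, psum h J <= psum h (J + p).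
Proof.
  intros H J p; induction p; [rewrite Nat.add_0_r; lra|].
  rewrite Nat.add_succ_r; simpl; specialize (H (J+p)%nat); lra.
Qed.

Lemma psum_le_Series h : (forall n, 0 <= h n) -> ex_series h -> forall J, psum h J <= Series h.
Proof.
  intros H He J.
  assert (Hl := is_lim_seq_le_loc (fun _ => psum h J) (psum h) (psum h J) (Series h)).
  simpl in Hl. apply Hl.
  - exists J; intros n Hn. replace n with (J + (n - J))%nat by lia. apply psum_mono; auto.
  - apply is_lim_seq_const.
  - apply psum_lim; auto.
Qed.

Lemma supnorm_spec x : in_linf x ->
  (forall n, Rabs (x n) <= supnorm x) /\
  (forall d, 0 < d -> exists n, supnorm x - d < Rabs (x n)).
Proof.
  intros [M HM]. unfold supnorm.
  destruct (Lub_Rbar_correct (fun r => exists n, r = Rabs (x n))) as [Hub Hl].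
  destruct (Lub_Rbar (fun r => exists n, r = Rabs (x n))) as [s| |] eqn:E; simpl.
  - split.
    + intros n; apply (Hub (Rabs (x n))); eauto.
    + intros d Hd. apply Classical_Prop.NNPP; intros Hn.
      assert (Hle : Rbar_le (Finite s) (Finite (s - d))).
      { apply Hl; intros r [n ->]. simpl. apply Rnot_lt_le; intros Hc; apply Hn; eauto. }
      simpl in Hle; lra.
  - exfalso. assert (Hle : Rbar_le p_infty (Finite M)).
    { apply Hl; intros r [n ->]; simpl; auto. } simpl in Hle; auto.
  - exfalso. assert (Hle := Hub (Rabs (x 0%nat)) (ex_intro _ 0%nat eq_refl)). simpl in Hle; auto.
Qed.

Lemma supnorm_ge x n : in_linf x -> Rabs (x n) <= supnorm x.
Proof. intros H; apply (proj1 (supnorm_spec x H)). Qed.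

Lemma supnorm_nonneg x : in_linf x -> 0 <= supnorm x.
Proof. intros H; eapply Rle_trans; [apply Rabs_pos| apply (supnorm_ge x 0 H)]. Qed.

Lemma supnorm_le x B : in_linf x -> (forall n, Rabs (x n) <= B) -> supnorm x <= B.
Proof.
  intros H HB. apply Rnot_lt_le; intros Hc.
  destruct (proj2 (supnorm_spec x H) (supnorm x - B)) as [n Hn]; [lra|].
  specialize (HB n); lra.
Qed.

Lemma term_le_sum (f : nat -> R) N n : (forall k, 0 <= f k) -> (n <= N)%nat -> f n <= sum_f_R0 f N.
Proof.
  intros Hf; induction N as [|N IH]; intros Hn.
  - replace n with 0%nat by lia; simpl; lra.
  - simpl. destruct (Nat.eq_dec n (S N)) as [->|Hne]; [|specialize (IH ltac:(lia))].
    + assert (0 <= sum_f_R0 f N) by (apply cond_pos_sum; auto). lra.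
    + specialize (Hf (S N)); lra.
Qed.

Lemma c0_linf x : in_c0 x -> in_linf x.
Proof.
  intros H. apply is_lim_seq_spec in H. destruct (H (mkposreal 1 Rlt_0_1)) as [N HN]; simpl in HN.
  exists (1 + sum_f_R0 (fun k => Rabs (x k)) N). intros n.
  assert (0 <= sum_f_R0 (fun k => Rabs (x k)) N) by (apply cond_pos_sum; intros; apply Rabs_pos).
  destruct (Compare_dec.le_lt_dec n N) as [Hn|Hn].
  - assert (H1 := term_le_sum (fun k => Rabs (x k)) N n (fun k => Rabs_pos _) Hn). simpl in H1; lra.
  - specialize (HN n ltac:(lia)). rewrite Rminus_0_r in HN. lra.
Qed.

Lemma nat_ineq b n : (n <= b)%nat -> ((b + 2) * 4 ^ n <= 2 ^ ((b + 1) * (b + 1)))%nat.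
Proof.
  intros Hn. apply Nat.le_trans with ((b+2) * 4 ^ b)%nat.
  { apply Nat.mul_le_mono_l, Nat.pow_le_mono_r; lia. }
  clear n Hn. induction b as [|b IH]; [simpl; lia|].
  replace ((S b + 1) * (S b + 1))%nat with ((b + 1) * (b + 1) + (2 * b + 3))%nat by nia.
  rewrite Nat.pow_add_r, Nat.pow_succ_r'.
  assert (H8 : (2 ^ 3 <= 2 ^ (2 * b + 3))%nat) by (apply Nat.pow_le_mono_r; lia).
  simpl in H8.
  set (P := (4 ^ b)%nat) in *. set (Q := (2 ^ ((b + 1) * (b + 1)))%nat) in *.
  set (T := (2 ^ (2 * b + 3))%nat) in *.
  apply Nat.le_trans with (8 * ((b + 2) * P))%nat; [nia|].
  apply Nat.le_trans with (8 * Q)%nat; [apply Nat.mul_le_mono_l; exact IH|]. rewrite (Nat.mul_comm Q T). apply Nat.mul_le_mono_r; exact H8.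
Qed.

Lemma a_ge (a : nat -> nat) : (forall n, (0 < a n)%nat) -> (forall n, (a n < a (S n))%nat) ->
  forall n, (n + 1 <= a n)%nat.
Proof. intros H0 HS n; induction n as [|n IH]; [specialize (H0 0%nat); lia| specialize (HS n); lia]. Qed.

Lemma a_mono (a : nat -> nat) : (forall n, (a n < a (S n))%nat) ->
  forall n m, (n <= m)%nat -> (a n <= a m)%nat.
Proof. intros HS n m H; induction H; [lia| specialize (HS m); lia]. Qed.

Lemma c_bound (A n : nat) : (n + 1 <= A)%nat ->
  (/ 2) ^ (A * A) * (INR A + 1) <= (/ 4) ^ n.
Proof.
  intros HA. destruct A as [|b]; [lia|].
  assert (Hn := nat_ineq b n ltac:(lia)).
  apply le_INR in Hn. rewrite mult_INR, !pow_INR, plus_INR in Hn.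
  replace (b + 1)%nat with (S b) in Hn by lia.
  replace (INR 2) with 2 in Hn by (simpl; lra). replace (INR 4) with 4 in Hn by (simpl; lra).
  replace (INR (2 + 0)%nat) with 2 in Hn by (simpl; lra).
  rewrite S_INR.
  rewrite !pow_inv.
  assert (P4 := pow_lt 4 n ltac:(lra)). assert (P2 := pow_lt 2 (S b * S b) ltac:(lra)).
  apply (Rmult_le_reg_r (2 ^ (S b * S b) * 4 ^ n)); [nra|].
  replace (/ 2 ^ (S b * S b) * (INR b + 1 + 1) * (2 ^ (S b * S b) * 4 ^ n))
    with ((INR b + 1 + 1) * 4 ^ n) by (field; lra).
  replace (/ 4 ^ n * (2 ^ (S b * S b) * 4 ^ n)) with (2 ^ (S b * S b)) by (field; lra).
  lra.
Qed.

Definition gv (u : nat -> nat -> R) (a : nat -> nat) n := fun k => u n k - unitvec (a n) k.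
Definition hterm u a x n := (/2)^(a n * a n) * Rabs (pairing x (gv u a n)).

Lemma read_norm_eq u a x : read_norm u a x = supnorm x + Series (hterm u a x).
Proof. reflexivity. Qed.

Lemma unitvec_01 m k : 0 <= unitvec m k <= 1.
Proof. unfold unitvec; destruct (Nat.eqb k m); lra. Qed.

Lemma unitvec_out m k : k <> m -> unitvec m k = 0.
Proof. intros H; unfold unitvec; apply Nat.eqb_neq in H; rewrite H; auto. Qed.

Lemma u_supp u a : read_data u a -> forall n k, (a n <= k)%nat -> u n k = 0.
Proof.
  intros (_ & _ & _ & _ & Hs & _) n k Hk.
  destruct (Req_dec (u n k) 0) as [E|E]; auto. apply Hs in E; lia.
Qed.

Lemma gv_supp u a : read_data u a -> forall n k, (a n < k)%nat -> gv u a n k = 0.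
Proof.
  intros H n k Hk; unfold gv. rewrite (u_supp u a H) by lia. rewrite unitvec_out by lia. ring.
Qed.

Lemma pairing_gv u a x n : read_data u a ->
  pairing x (gv u a n) = sum_f_R0 (fun k => x k * gv u a n k) (a n).
Proof.
  intros H; unfold pairing; apply Series_fin. intros k Hk; rewrite (gv_supp u a H) by lia; ring.
Qed.

Lemma hterm_bound u a x B n : read_data u a -> (forall k, Rabs (x k) <= B) ->
  0 <= hterm u a x n <= B * (/ 4) ^ n.
Proof.
  intros H HB.
  assert (HB0 : 0 <= B) by (eapply Rle_trans; [apply Rabs_pos| apply (HB 0%nat)]).
  assert (Hc : 0 < (/2) ^ (a n * a n)) by (apply pow_lt; lra).
  assert (Hp : Rabs (pairing x (gv u a n)) <= B * (INR (a n) + 1)).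
  { rewrite pairing_gv by auto. eapply Rle_trans; [apply Rsum_abs|].
    eapply Rle_trans.
    { apply (sum_Rle _ (fun k => Rabs (u n k) * B + (1 * unitvec (a n) k) * B)).
      intros k _. unfold gv. rewrite Rabs_mult.
      assert (E := unitvec_01 (a n) k).
      assert (Rabs (u n k - unitvec (a n) k) <= Rabs (u n k) + unitvec (a n) k).
      { unfold Rminus; eapply Rle_trans; [apply Rabs_triang|]. rewrite Rabs_Ropp, (Rabs_right (unitvec (a n) k)) by lra. lra. }
      specialize (HB k). assert (0 <= Rabs (u n k - unitvec (a n) k)) by apply Rabs_pos.
      assert (0 <= Rabs (x k)) by apply Rabs_pos. nra. }
    rewrite plus_sum, <- !scal_sum, sum_unitvec, Nat.leb_refl.
    assert (Hs : sum_f_R0 (fun k => Rabs (u n k)) (a n) < INR (a n)).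
    { assert (HS := proj2 (proj2 (proj2 (proj2 (proj2 H))))). specialize (HS n).
      rewrite (Series_fin _ (a n)) in HS; auto.
      intros k Hk. rewrite (u_supp u a) by (auto; lia). apply Rabs_R0. }
    nra. }
  unfold hterm. split.
  - apply Rmult_le_pos; [lra| apply Rabs_pos].
  - destruct H as (H1 & H2 & H3 & H4 & H5 & H6).
    assert (Hcb := c_bound (a n) n (a_ge a H3 H4 n)).
    assert (0 <= Rabs (pairing x (gv u a n))) by apply Rabs_pos.
    apply Rle_trans with ((/ 2) ^ (a n * a n) * (B * (INR (a n) + 1))).
    + apply Rmult_le_compat_l; lra.
    + nra.
Qed.

Lemma ex_series_hterm u a x B : read_data u a -> (forall k, Rabs (x k) <= B) ->
  ex_series (hterm u a x).
Proof.
  intros H HB. apply (@ex_series_le R_AbsRing R_CompleteNormedModule _ (fun n => B * (/4)^n)).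
  - intros n; change (norm (hterm u a x n)) with (Rabs (hterm u a x n)); destruct (hterm_bound u a x B n H HB). rewrite Rabs_right by lra; lra.
  - exists (B * / (1 - / 4)). apply (is_series_scal_l B (fun n => (/4)^n)). apply is_series_geom. rewrite Rabs_right; lra.
Qed.

Definition fs (y : nat -> R) := exists L, forall k, (L < k)%nat -> y k = 0.

Lemma pairing_fs x y : fs y -> ex_series (fun k => x k * y k).
Proof. intros [L HL]; apply (ex_series_fin _ L); intros k Hk; rewrite HL by auto; ring. Qed.

Lemma pairing_plus x y z : fs y -> fs z ->
  pairing x (fun k => y k + z k) = pairing x y + pairing x z.
Proof.
  intros Hy Hz; unfold pairing. rewrite <- Series_plus by (apply pairing_fs; auto).
  apply Series_ext; intros; ring.
Qed.

Lemma pairing_scal x c y : pairing x (fun k => c * y k) = c * pairing x y.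
Proof. unfold pairing; rewrite <- Series_scal_l; apply Series_ext; intros; ring. Qed.

Lemma pairing_unitvec x m : pairing x (unitvec m) = x m.
Proof.
  unfold pairing; rewrite (Series_fin _ m).
  - rewrite sum_unitvec, Nat.leb_refl; auto.
  - intros k Hk; rewrite unitvec_out by lia; ring.
Qed.

Fixpoint Yr (u : nat -> nat -> R) (a : nat -> nat) (sg : R) (k0 : nat) (eps : nat -> R) (J : nat)
  : nat -> R :=
  match J with
  | O => fun j => sg * unitvec k0 j
  | S J => fun j => Yr u a sg k0 eps J j + (eps J * (/2)^(a J * a J)) * gv u a J j
  end.

Lemma Yr_supp u a sg k0 eps J : read_data u a ->
  forall k, (k0 + a J < k)%nat -> Yr u a sg k0 eps J k = 0.
Proof.
  intros H. assert (HS := proj1 (proj2 (proj2 (proj2 H)))).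
  induction J as [|J IH]; intros k Hk; simpl.
  - rewrite unitvec_out by lia; ring.
  - assert (Ha := HS J). rewrite IH by lia. rewrite (gv_supp u a H) by lia. ring.
Qed.

Lemma Yr_fs u a sg k0 eps J : read_data u a -> fs (Yr u a sg k0 eps J).
Proof. intros H; exists (k0 + a J)%nat; apply Yr_supp; auto. Qed.

Lemma gv_fs u a n : read_data u a -> fs (gv u a n).
Proof. intros H; exists (a n); apply gv_supp; auto. Qed.

Lemma Yr_pairing u a sg k0 eps J x : read_data u a ->
  pairing x (Yr u a sg k0 eps J) =
  sg * x k0 + psum (fun n => eps n * (/2)^(a n * a n) * pairing x (gv u a n)) J.
Proof.
  intros H; induction J as [|J IH]; simpl.
  - rewrite pairing_scal, pairing_unitvec; ring.
  - rewrite pairing_plus.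
    + rewrite IH, pairing_scal. ring.
    + apply Yr_fs; auto.
    + destruct (gv_fs u a J H) as [L HL]; exists L; intros k Hk; rewrite HL by auto; ring.
Qed.

Lemma psum_abs f g : (forall n, Rabs (f n) <= g n) -> forall J, Rabs (psum f J) <= psum g J.
Proof.
  intros H J; induction J; simpl; [rewrite Rabs_R0; lra|].
  eapply Rle_trans; [apply Rabs_triang|]. specialize (H J); lra.
Qed.

Lemma psum_ext f g : (forall n, f n = g n) -> forall J, psum f J = psum g J.
Proof. intros H J; induction J; simpl; [auto| rewrite IHJ, H; auto]. Qed.

Lemma Yr_ball u a sg k0 eps J : read_data u a -> Rabs sg <= 1 -> (forall n, Rabs (eps n) <= 1) ->
  dual_ball u a (Yr u a sg k0 eps J).
Proof.
  intros H Hsg Heps. split.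
  - destruct (Yr_fs u a sg k0 eps J H) as [L HL]. unfold in_l1.
    apply (ex_series_fin _ L). intros k Hk; rewrite HL by auto; apply Rabs_R0.
  - intros x Hx. apply c0_linf in Hx.
    rewrite Yr_pairing, read_norm_eq by auto.
    eapply Rle_trans; [apply Rabs_triang|]. apply Rplus_le_compat.
    + rewrite Rabs_mult. assert (Hk := supnorm_ge x k0 Hx).
      assert (0 <= Rabs (x k0)) by apply Rabs_pos. assert (0 <= Rabs sg) by apply Rabs_pos. nra.
    + eapply Rle_trans; [apply (psum_abs _ (hterm u a x))|].
      * intros n. unfold hterm. rewrite !Rabs_mult.
        rewrite (Rabs_right ((/2) ^ (a n * a n))) by (apply Rle_ge, pow_le; lra).
        assert (0 <= (/2) ^ (a n * a n)) by (apply pow_le; lra).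
        assert (0 <= Rabs (pairing x (gv u a n))) by apply Rabs_pos.
        specialize (Heps n). assert (0 <= Rabs (eps n)) by apply Rabs_pos. rewrite Rmult_assoc. assert (0 <= (/2) ^ (a n * a n) * Rabs (pairing x (gv u a n))) by (apply Rmult_le_pos; auto). nra.
      * apply psum_le_Series.
        -- intros n; apply (hterm_bound u a x (supnorm x) n H (fun k => supnorm_ge x k Hx)).
        -- apply (ex_series_hterm u a x (supnorm x) H (fun k => supnorm_ge x k Hx)).
Qed.

Lemma lower u a xbar : read_data u a -> in_linf xbar -> forall d, 0 < d ->
  exists y, dual_ball u a y /\ read_norm u a xbar - d < Rabs (pairing xbar y).
Proof.
  intros H Hx d Hd.
  destruct (proj2 (supnorm_spec xbar Hx) (d/2) ltac:(lra)) as [k0 Hk0].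
  assert (Hex := ex_series_hterm u a xbar (supnorm xbar) H (fun k => supnorm_ge xbar k Hx)).
  assert (Hl := psum_lim _ Hex). apply is_lim_seq_spec in Hl.
  destruct (Hl (mkposreal (d/2) ltac:(lra))) as [J HJ]. specialize (HJ J (le_n J)). simpl in HJ.
  set (sg := if Rle_dec 0 (xbar k0) then 1 else -1).
  set (eps := fun n => if Rle_dec 0 (pairing xbar (gv u a n)) then 1 else -1).
  exists (Yr u a sg k0 eps J). split.
  - apply Yr_ball; auto.
    + unfold sg; destruct Rle_dec; unfold Rabs; destruct Rcase_abs; lra.
    + intros n; unfold eps; destruct (Rle_dec 0 (pairing xbar (gv u a n))); unfold Rabs; destruct Rcase_abs; lra.
  - rewrite Yr_pairing, read_norm_eq by auto.
    rewrite (psum_ext _ (hterm u a xbar)).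
    + assert (E : sg * xbar k0 = Rabs (xbar k0)).
      { unfold sg; destruct Rle_dec; [rewrite Rabs_right| rewrite Rabs_left]; lra. }
      rewrite E. eapply Rlt_le_trans; [|apply RRle_abs].
      revert HJ; unfold Rabs at 1; destruct Rcase_abs; intros; lra.
    + intros n; unfold eps, hterm. destruct (Rle_dec 0 (pairing xbar (gv u a n))); [rewrite (Rabs_right (pairing _ _))| rewrite (Rabs_left (pairing _ _))]; lra.
Qed.

Definition tr (xbar : nat -> R) (j : nat) := fun k => if Nat.leb k j then xbar k else 0.

Lemma half_pow_le K n : (K <= n)%nat -> (/2) ^ n <= (/2) ^ K.
Proof.
  intros H. replace n with (K + (n - K))%nat by lia. rewrite pow_add.
  assert (0 < (/2)^K) by (apply pow_lt; lra).
  assert ((/2)^(n-K) <= 1).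
  { rewrite <- (pow1 (n-K)). apply pow_incr; lra. }
  nra.
Qed.

Lemma upper u a xbar y : read_data u a -> in_linf xbar -> dual_ball u a y ->
  Rabs (pairing xbar y) <= read_norm u a xbar.
Proof.
  intros H Hx Hy.
  set (s := supnorm xbar).
  assert (Hs : forall k, Rabs (xbar k) <= s) by (intros; apply supnorm_ge; auto).
  assert (Hs0 : 0 <= s) by (apply supnorm_nonneg; auto).
  set (SS := Series (hterm u a xbar)).
  assert (Hex := ex_series_hterm u a xbar s H Hs).
  assert (Htr_b : forall j k, Rabs (tr xbar j k) <= s).
  { intros j k; unfold tr; destruct (Nat.leb k j); [auto| rewrite Rabs_R0; auto]. }
  assert (Htr_c0 : forall j, in_c0 (tr xbar j)).
  { intros j; unfold in_c0. apply (is_lim_seq_ext_loc (fun _ => 0)); [|apply is_lim_seq_const].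
    exists (S j); intros n Hn; unfold tr; rewrite (proj2 (Nat.leb_gt n j)) by lia; auto. }
  assert (Hpt : forall j, pairing (tr xbar j) y = sum_f_R0 (fun k => xbar k * y k) j).
  { intros j; unfold pairing; rewrite (Series_fin _ j).
    - apply sum_eq; intros i Hi; unfold tr; rewrite (proj2 (Nat.leb_le i j)) by lia; auto.
    - intros k Hk; unfold tr; rewrite (proj2 (Nat.leb_gt k j)) by lia; ring. }
  assert (Hexy : ex_series (fun k => xbar k * y k)).
  { apply (@ex_series_le R_AbsRing R_CompleteNormedModule _ (fun k => s * Rabs (y k))).
    - intros k; change (norm (xbar k * y k)) with (Rabs (xbar k * y k)).
      rewrite Rabs_mult. specialize (Hs k). assert (0 <= Rabs (y k)) by apply Rabs_pos. nra.
    - exists (s * Series (fun k => Rabs (y k))).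
      apply (is_series_scal_l s (fun k => Rabs (y k))). apply Series_correct. apply (proj1 Hy). }
  assert (Hlim : is_lim_seq (fun j => Rabs (pairing (tr xbar j) y)) (Rabs (pairing xbar y))).
  { apply (is_lim_seq_abs _ (Finite (pairing xbar y))).
    apply (is_lim_seq_ext (fun j => sum_f_R0 (fun k => xbar k * y k) j)).
    { intros; symmetry; auto. }
    apply is_lim_seq_Reals, is_series_Reals, Series_correct; auto. }
  assert (HK : forall K, Rabs (pairing xbar y) <= s + SS + 2 * s * (/2)^K).
  { intros K.
    assert (Hl := is_lim_seq_le_loc (fun j => Rabs (pairing (tr xbar j) y))
                   (fun _ => s + SS + 2 * s * (/2)^K) (Rabs (pairing xbar y)) (s + SS + 2 * s * (/2)^K)).
    simpl in Hl. apply Hl; [|exact Hlim| apply is_lim_seq_const].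
    exists (a K); intros j Hj.
    eapply Rle_trans; [apply (proj2 Hy); apply Htr_c0|]. rewrite read_norm_eq.
    assert (Hlin : in_linf (tr xbar j)) by (exists s; auto).
    replace (s + SS + 2 * s * (/2)^K) with (s + (SS + 2 * s * (/2)^K)) by ring.
    apply Rplus_le_compat; [apply supnorm_le; auto|].
    assert (HK0 : 0 <= (/2)^K) by (apply pow_le; lra).
    assert (Hg : is_series (fun n => (/2)^n) (/ (1 - /2))) by (apply is_series_geom; rewrite Rabs_right; lra).
    assert (Hexg : ex_series (fun n => s * (/2)^K * (/2)^n)).
    { exists (s * (/2)^K * / (1 - /2)). exact (is_series_scal_l (s * (/2)^K) (fun n => (/2)^n) _ Hg). }
    apply (@Rle_trans _ (Series (fun n => hterm u a xbar n + s * (/2)^K * (/2)^n))).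
    - apply Series_le.
      + intros n. split; [apply (hterm_bound u a (tr xbar j) s n H (Htr_b j))|].
        assert (Hn0 : 0 <= (/2)^n) by (apply pow_le; lra).
        destruct (hterm_bound u a xbar s n H Hs) as [Hh0 _].
        destruct (Compare_dec.le_lt_dec n K) as [HnK|HnK].
        * assert (E : hterm u a (tr xbar j) n = hterm u a xbar n).
          { unfold hterm. rewrite !pairing_gv by auto. f_equal. f_equal. apply sum_eq.
            intros i Hi. unfold tr. assert (Ha := a_mono a (proj1 (proj2 (proj2 (proj2 H)))) n K HnK).
            rewrite (proj2 (Nat.leb_le i j)) by lia. auto. }
          rewrite E. assert (0 <= s * (/2)^K * (/2)^n) by (apply Rmult_le_pos; [apply Rmult_le_pos|]; auto).
          lra.
        * destruct (hterm_bound u a (tr xbar j) s n H (Htr_b j)) as [_ Hb].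
          replace ((/4)^n) with ((/2)^n * (/2)^n) in Hb
            by (rewrite <- Rpow_mult_distr; f_equal; field).
          assert (Hle := half_pow_le K n ltac:(lia)).
          assert ((/2)^n * (/2)^n <= (/2)^K * (/2)^n) by (apply Rmult_le_compat_r; auto).
          nra.
      + exists (SS + s * (/2)^K * / (1 - /2)).
        exact (@is_series_plus R_AbsRing R_NormedModule _ _ _ _ (Series_correct _ Hex)
                 (is_series_scal_l (s * (/2)^K) (fun n => (/2)^n) _ Hg)).
    - rewrite Series_plus by auto. rewrite (Series_scal_l (s * (/2)^K) (fun n => (/2)^n)), (is_series_unique _ _ Hg).
      replace (/ (1 - /2)) with 2 by field. unfold SS. lra. }
  rewrite read_norm_eq. fold s SS.
  assert (Hg : is_lim_seq (fun K => 2 * s * (/2)^K) (2 * s * 0)).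
  { apply (is_lim_seq_scal_l _ (2 * s) 0). apply is_lim_seq_geom. rewrite Rabs_right; lra. }
  assert (Hv := is_lim_seq_plus' _ _ _ _ (is_lim_seq_const (s + SS)) Hg).
  assert (Hl := is_lim_seq_le (fun _ => Rabs (pairing xbar y)) _ _ _ HK (is_lim_seq_const _) Hv).
  simpl in Hl. lra.
Qed.

Theorem proposition2p1 (u : nat -> nat -> R) (a : nat -> nat) :
  read_data u a ->
  forall xbar : nat -> R, in_linf xbar ->
    bidual_norm u a xbar = Finite (read_norm u a xbar).
Proof.
  intros H xbar Hx. unfold bidual_norm. apply is_lub_Rbar_unique. split.
  - intros r [y [Hy ->]]. simpl. apply upper; auto.
  - intros b Hb. destruct b as [b| |]; simpl; auto.
    + apply Rnot_lt_le; intro Hc.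
      destruct (lower u a xbar H Hx (read_norm u a xbar - b)) as [y [Hy Hlt]]; [lra|].
      specialize (Hb _ (ex_intro _ y (conj Hy eq_refl))). simpl in Hb. lra.
    + destruct (lower u a xbar H Hx 1) as [y [Hy _]]; [lra|].
      exact (Hb _ (ex_intro _ y (conj Hy eq_refl))).
Qed.
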